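(* Let $\mathscr T=(V,\mathcal E)$ be the directed Cartesian product of rooted directed trees $\mathscr T_1,\dots,\mathscr T_d$, let $S_{\boldsymbol\lambda}=(S_1,\dots,S_d)$ be a commuting multishift on $\mathscr T$ and let $E=\bigcap_j\ker S_j^*$. Then $$\bigvee_{j=1}^d\bigoplus_{v\in D_j}\Big(l^2(\mathsf{Chi}_j(v))\ominus[\Gamma^{(j)}_v]\Big)\oplus[e_{\mathsf{root}}]\ \subseteq\ E\ \subseteq\ \bigvee\{e_v:v\in F_1\times\dots\times F_d\},$$ where $D_j=\{v\in V:v_j\in V^{(j)}_\prec,\ v_i=\mathsf{root}_i\text{ for }i\ne j\}$, $\Gamma^{(j)}_v:\mathsf{Chi}_j(v)\to\mathbb C$ is $\Gamma^{(j)}_v(u)=\lambda^{(j)}_u$, and $F_j=\mathsf{Chi}(V^{(j)}_\prec)\cup\{\mathsf{root}_j\}$.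
   Context: Directed trees: no loops or circuits, connected ignoring orientation, unique parent $\mathsf{par}(v)$ for vertices with incoming edges; rooted: unique parentless vertex $\mathsf{root}$; $\mathsf{Chi}(u)=\{v:(u,v)\in\mathcal E\}$, $\mathsf{Chi}(W)=\bigcup_{u\in W}\mathsf{Chi}(u)$; all leafless. $V^{(j)}_\prec=\{u\in V_j:\mathrm{card}\,\mathsf{Chi}(u)\ge2\}$. Directed Cartesian product of rooted trees $\mathscr T_j=(V_j,\mathcal E_j)$: $V=V_1\times\dots\times V_d$ (countably infinite), $(v,w)\in\mathcal E$ iff for some $k$, $(v_k,w_k)\in\mathcal E_k$ and $w_j=v_j$ ($j\ne k$); $\mathsf{root}=(\mathsf{root}_j)$. $\mathsf{Chi}_j(v)=\{w:w_j\in\mathsf{Chi}(v_j),w_k=v_k\ (k\ne j)\}$. Multishift: positive weights, $S_je_v=\sum_{w\in\mathsf{Chi}_j(v)}\lambda^{(j)}_we_w$, each $S_j$ bounded on $l^2(V)$. $l^2(W)$ for $W\subseteq V$ is viewed as a subspace of $l^2(V)$; $[x]$ is the span of $x$; $\bigvee$ is closed linear span. *)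

(* Defs.v *)
From HB Require Import structures.
From mathcomp Require Import all_boot all_order all_algebra.
From mathcomp Require Import all_classical all_reals.
From mathcomp Require Import complex.
From mathcomp Require Import ereal esum.

Set Implicit Arguments.
Unset Strict Implicit.
Unset Printing Implicit Defensive.

Import Order.TTheory GRing.Theory Num.Theory.
Local Open Scope classical_set_scope.
Local Open Scope ring_scope.

Record rtree := RTree {
  tv : countType;
  tedge : rel tv;
  troot : tv;
  tree_noloop : forall v, ~~ tedge v v;
  tree_nocircuit : forall v (s : seq tv), s != [::] -> path tedge v s -> last v s != v;
  tree_connected : forall u v, exists s : seq tv,
      path (fun a b => tedge a b || tedge b a) u s /\ last u s = v;
  tree_par_uniq : forall u1 u2 v, tedge u1 v -> tedge u2 v -> u1 = u2;
  tree_root_noparent : forall u, ~~ tedge u troot;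
  tree_root_unique : forall v, v <> troot -> exists u, tedge u v;
  tree_leafless : forall u, exists v, tedge u v
}.

Definition tChi (T : rtree) (u : tv T) : set (tv T) := [set v | tedge u v].

Definition Vprec (T : rtree) : set (tv T) :=
  [set u | exists v1 v2, v1 <> v2 /\ tedge u v1 /\ tedge u v2].

Definition Fset (T : rtree) : set (tv T) :=
  [set w | w = troot T \/ exists u, @Vprec T u /\ tedge u w].

Section Product.
Variables (d : nat) (Tr : 'I_d -> rtree).

Definition PV : Type := {dffun forall j : 'I_d, tv (Tr j)}.

Definition proot : PV := [ffun j => troot (Tr j)].

Definition Chij (j : 'I_d) (v : PV) : set PV :=
  [set w | tedge (v j) (w j) /\ forall k, k != j -> w k = v k].

Definition Dj (j : 'I_d) : set PV :=
  [set v | Vprec (v j) /\ forall i, i != j -> v i = troot (Tr i)].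

Definition Fprod : set PV := [set v | forall j, Fset (v j)].

End Product.

Section L2.
Variables (R : realType) (V : choiceType).
Local Notation C := R[i].

Definition sqnorm (f : V -> C) : \bar R :=
  \esum_(v in [set: V]) ((Normc.normc (f v)) ^+ 2)%:E.

Definition l2 (f : V -> C) : Prop := (sqnorm f < +oo)%E.

Definition has_sum (a : V -> C) (c : C) : Prop :=
  forall eps : R, 0 < eps -> exists A0 : set V, finite_set A0 /\
    forall A : set V, finite_set A -> A0 `<=` A ->
      Normc.normc (\sum_(v \in A) a v - c) < eps.

Definition inner_is (f g : V -> C) (c : C) : Prop :=
  has_sum (fun v => f v * conjc (g v)) c.

Definition ebasis (v : V) : V -> C := fun w => if w == v then 1 else 0.

Definition clspan (A : set (V -> C)) : set (V -> C) :=
  [set f | l2 f /\ forall eps : R, 0 < eps ->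
     exists n (a : 'I_n -> C) (x : 'I_n -> V -> C),
       (forall i, A (x i)) /\
       (sqnorm (fun v => (f v - \sum_(i < n) a i * x i v)%R) < eps%:E)%E].

End L2.

Section Multishift.
Variables (R : realType) (d : nat) (Tr : 'I_d -> rtree).
Local Notation PV := (PV Tr).
Local Notation C := R[i].

(* S_j f (w) = lam^{(j)}_w f(par_j w)  (0 if w_j = root_j), i.e. the operator
   determined by S_j e_v = sum_{w in Chi_j(v)} lam^{(j)}_w e_w.               *)
Definition shiftj (lam : 'I_d -> PV -> R) (j : 'I_d) (f : PV -> C) : PV -> C :=
  fun w => \sum_(v \in [set v | Chij j v w]) real_complex R (lam j w) * f v.

Definition is_multishift (lam : 'I_d -> PV -> R) : Prop :=
  (forall j (w : PV), w j <> troot (Tr j) -> 0 < lam j w) /\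
  (forall j, exists M : R, forall f : PV -> C, l2 f ->
       (sqnorm (shiftj lam j f) <= M%:E * sqnorm f)%E).

Definition commuting_multishift (lam : 'I_d -> PV -> R) : Prop :=
  forall i j (f : PV -> C), l2 f ->
    shiftj lam i (shiftj lam j f) = shiftj lam j (shiftj lam i f).

(* E = \bigcap_j ker S_j^*  ( f in ker S_j^*  iff  <S_j g, f> = 0 for all g in l^2 ) *)
Definition joint_kernel_adj (lam : 'I_d -> PV -> R) : set (PV -> C) :=
  [set f | l2 f /\ forall j (g : PV -> C), l2 g -> inner_is (shiftj lam j g) f 0].

(* Gamma^{(j)}_v : Chi_j(v) -> C, u |-> lam^{(j)}_u, extended by 0 *)
Definition Gamma (lam : 'I_d -> PV -> R) (j : 'I_d) (v : PV) : PV -> C :=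
  fun u => if `[< Chij j v u >] then real_complex R (lam j u) else 0.

Definition chi_minus_gamma (lam : 'I_d -> PV -> R) (j : 'I_d) (v : PV) : set (PV -> C) :=
  [set f | l2 f /\ (forall u, ~ Chij j v u -> f u = 0) /\ inner_is f (Gamma lam j v) 0].

Definition lower_space (lam : 'I_d -> PV -> R) : set (PV -> C) :=
  clspan ([set f | exists j v, Dj j v /\ chi_minus_gamma lam j v f]
          `|` [set @ebasis R _ (proot Tr)]).

Definition upper_space : set (PV -> C) :=
  clspan [set @ebasis R _ v | v in @Fprod d Tr].

End Multishift.

(* Main.v *)
Require Import Defs.
From HB Require Import structures.
From mathcomp Require Import all_boot all_order all_algebra.
From mathcomp Require Import all_classical all_reals.
From mathcomp Require Import complex.
From mathcomp Require Import finmap ereal esum.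
From mathcomp.algebra_tactics Require Import ring lra.

Set Implicit Arguments.
Unset Strict Implicit.
Unset Printing Implicit Defensive.
Import Order.TTheory GRing.Theory Num.Theory.
Section A.
Local Open Scope classical_set_scope.
Local Open Scope ring_scope.
Variables (R : realType) (V : choiceType).
Local Notation C := R[i].
Local Notation nc := (@Normc.normc R).

Lemma nc_ge0 (x : C) : 0 <= nc x.
Proof. by case: x => a b; rewrite /Normc.normc sqrtr_ge0. Qed.

Lemma nc_conj (x : C) : nc (conjc x) = nc x.
Proof. by case: x => a b; rewrite /Normc.normc /= sqrrN. Qed.

Lemma conjM (a b : C) : conjc (a * b) = conjc a * conjc b.
Proof. exact: rmorphM. Qed.

Lemma conjR (r : R) : conjc (real_complex R r) = real_complex R r.
Proof. by rewrite /= oppr0. Qed.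

Lemma nc_eq0 (x : C) : (nc x == 0) = (x == 0).
Proof. apply/eqP/eqP => [/Normc.eq0_normc//|->]; exact: Normc.normc0. Qed.

Lemma nc_sum (I : Type) (r : seq I) (F : I -> C) :
  nc (\sum_(i <- r) F i) <= \sum_(i <- r) nc (F i).
Proof.
elim: r => [|x r IH]; first by rewrite !big_nil Normc.normc0.
rewrite !big_cons; apply: le_trans (le_normcD _ _) _; exact: lerD.
Qed.

Lemma has_sum_ext (a b : V -> C) c : a =1 b -> has_sum a c -> has_sum b c.
Proof. by move=> /funext ->. Qed.

Lemma has_sum0 : has_sum (fun _ : V => 0 : C) 0.
Proof.
move=> e e0; exists set0; split => // A _ _.
by rewrite fsbig1 // subr0 Normc.normc0.
Qed.

Lemma has_sumD (a b : V -> C) c e : has_sum a c -> has_sum b e ->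
  has_sum (fun v => a v + b v) (c + e).
Proof.
move=> ha hb eps eps0.
have e2 : 0 < eps / 2 by rewrite divr_gt0.
have [A1 [fA1 H1]] := ha _ e2; have [A2 [fA2 H2]] := hb _ e2.
exists (A1 `|` A2); split; first by rewrite finite_setU.
move=> A fA sA.
rewrite fsbig_split //.
rewrite (_ : _ - _ = (\sum_(i \in A) a i - c) + (\sum_(i \in A) b i - e)); last first.
  by rewrite opprD !addrA; congr (_ + _); rewrite -!addrA; congr (_ + _); rewrite addrC.
apply: le_lt_trans (le_normcD _ _) _.
rewrite [eps](splitr eps); apply: ltrD.
  by apply: H1 => // x ?; apply: sA; left.
by apply: H2 => // x ?; apply: sA; right.
Qed.

Lemma has_sumZ (a : V -> C) c k : has_sum a c -> has_sum (fun v => k * a v) (k * c).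
Proof.
move=> ha eps eps0.
have k1 : 0 < nc k + 1 by rewrite ltr_wpDl // nc_ge0.
have [A1 [fA1 H1]] := ha (eps / (nc k + 1)) (divr_gt0 eps0 k1).
exists A1; split => // A fA sA.
rewrite -mulr_fsumr -mulrBr Normc.normcM.
have := H1 A fA sA; set x := nc _ => hx.
have x0 : 0 <= x by apply: nc_ge0.
apply: (@le_lt_trans _ _ ((nc k + 1) * x)).
  by rewrite ler_wpM2r // lerDl.
by rewrite mulrC -ltr_pdivlMr.
Qed.

Lemma fsbig_seqE (A : set V) (F : V -> C) : finite_set A ->
  \sum_(i \in A) F i = \sum_(i <- fset_set A) F i.
Proof. exact: fsbig_finite. Qed.

Lemma has_sum_conj (a : V -> C) c : has_sum a c ->
  has_sum (fun v => conjc (a v)) (conjc c).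
Proof.
move=> ha eps eps0; have [A1 [fA1 H1]] := ha _ eps0.
exists A1; split => // A fA sA.
rewrite fsbig_seqE // -rmorph_sum -rmorphB nc_conj -fsbig_seqE //.
exact: H1.
Qed.

Lemma has_sum_single (a : V -> C) c v :
  (forall w, w <> v -> a w = 0) -> has_sum a c -> a v = c.
Proof.
move=> supp ha; apply/eqP; rewrite -subr_eq0 -nc_eq0.
have : forall eps, 0 < eps -> nc (a v - c) < eps.
  move=> eps eps0; have [A1 [fA1 H1]] := ha _ eps0.
  have := H1 (A1 `|` [set v]).
  have fU : finite_set (A1 `|` [set v]) by rewrite finite_setU; split => //; exact: finite_set1.
  move=> /(_ fU (@subsetUl _ _ _)).
  rewrite (fsbigD1 v) //; last by right.
  rewrite (@fsbig1 _ _ _ _ _ a); first by rewrite /= addr0.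
  by move=> w [_ /= wv]; exact: supp.
move=> H; have := nc_ge0 (a v - c); rewrite le_eqVlt => /orP[/eqP <-//|/[dup] /H].
by rewrite ltxx.
Qed.

Lemma sq_le_sqnorm (b : V -> C) (A : set V) : finite_set A ->
  ((\sum_(v <- fset_set A) nc (b v) ^+ 2)%:E <= sqnorm b)%E.
Proof.
move=> fA; rewrite /sqnorm; apply: esum_ge; exists A; first by split.
by rewrite fsumEFin // fsbig_finite.
Qed.

Lemma sqnorm_ge0 (b : V -> C) : (0 <= sqnorm b)%E.
Proof. by apply: esum_ge0 => x _; rewrite lee_fin sqr_ge0. Qed.

Lemma amgm (t x y : R) : 0 < t -> x * y <= (t * x ^+ 2 + y ^+ 2 / t) / 2.
Proof.
move=> t0; set u := y / t.
have -> : y = t * u by rewrite /u mulrC divfK // gt_eqF.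
have tn : t != 0 by rewrite gt_eqF.
have -> : (t * u) ^+ 2 / t = t * u ^+ 2 by field.
have : 0 <= t * (x - u) ^+ 2 by rewrite mulr_ge0 ?sqr_ge0 // ltW.
move=> h; rewrite ler_pdivlMr //; nra.
Qed.

Lemma has_sum_closure (s f : V -> C) : (sqnorm s < +oo)%E ->
  (forall delta : R, 0 < delta -> exists h : V -> C,
     (sqnorm (fun v => (f v - h v)%R) < delta%:E)%E /\
     has_sum (fun v => s v * conjc (h v)) 0) ->
  has_sum (fun v => s v * conjc (f v)) 0.
Proof.
move=> sfin happ eps eps0.
have sfn : sqnorm s \is a fin_num by rewrite ge0_fin_numE // sqnorm_ge0.
set K := fine (sqnorm s).
have K0 : 0 <= K by rewrite fine_ge0 // sqnorm_ge0.
have sK : forall A, finite_set A -> \sum_(v <- fset_set A) nc (s v) ^+ 2 <= K.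
  move=> A fA; rewrite -lee_fin /K fineK //; exact: sq_le_sqnorm.
set t := eps / (2 * (K + 1)).
have t0 : 0 < t by rewrite divr_gt0 // mulr_gt0 // ltr_wpDl.
have td : 0 < t * eps / 2 by rewrite divr_gt0 // mulr_gt0.
have [h [hd hs]] := happ (t * eps / 2) td.
have e2 : 0 < eps / 2 by rewrite divr_gt0.
have [A0 [fA0 HA0]] := hs _ e2.
exists A0; split => // A fA sA.
have -> : \sum_(v \in A) s v * conjc (f v) - 0 =
   (\sum_(v \in A) s v * conjc (h v) - 0) + \sum_(v \in A) s v * conjc (f v - h v).
  rewrite !subr0 -fsbig_split //; apply: eq_fsbigr => v _.
  by rewrite rmorphB /= mulrBr addrC subrK.
apply: le_lt_trans (le_normcD _ _) _.
rewrite [eps](splitr eps); apply: ltr_leD; first exact: HA0.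
rewrite fsbig_seqE //. apply: le_trans; first exact: nc_sum.
apply: (@le_trans _ _ (\sum_(v <- fset_set A)
   ((t * nc (s v) ^+ 2 + nc (f v - h v) ^+ 2 / t) / 2))).
  apply: ler_sum => v _; rewrite Normc.normcM nc_conj; exact: amgm.
rewrite -mulr_suml big_split /= -mulr_sumr -mulr_suml.
have hb : \sum_(v <- fset_set A) nc (f v - h v) ^+ 2 < t * eps / 2.
  rewrite -lte_fin; apply: le_lt_trans hd; exact: (sq_le_sqnorm (fun v => f v - h v)).
set a := \sum_(v <- fset_set A) nc (s v) ^+ 2.
set b := \sum_(v <- fset_set A) nc (f v - h v) ^+ 2.
have ha : a <= K by exact: sK.
have h1 : t * a <= eps / 2.
  apply: (@le_trans _ _ (t * (K + 1))).
    rewrite ler_wpM2l ?ltW //; lra.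
  have k1 : K + 1 != 0 by rewrite gt_eqF // ltr_wpDl.
  have -> : t * (K + 1) = eps / 2 by rewrite /t; field.
  by [].
have h2 : b / t <= eps / 2.
  rewrite ler_pdivrMr // mulrC; apply: ltW; by rewrite mulrA.

lra.
Qed.

Lemma has_sum_eq (a b : V -> C) c c' : has_sum a c -> c = c' -> a =1 b -> has_sum b c'.
Proof. by move=> h <- /funext <-. Qed.

Lemma has_sum_span (s : V -> C) n (a : 'I_n -> C) (x : 'I_n -> V -> C) :
  (forall i, has_sum (fun v => s v * conjc (x i v)) 0) ->
  has_sum (fun v => s v * conjc (\sum_(i < n) a i * x i v)) 0.
Proof.
elim: n a x => [|n IH] a x hx.
  apply: has_sum_eq has_sum0 _ _ => // v; by rewrite big_ord0 rmorph0 mulr0.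
have h1 := IH (fun i => a (widen_ord (leqnSn n) i)) (fun i => x (widen_ord (leqnSn n) i))
   (fun i => hx _).
have h2 := has_sumZ (conjc (a ord_max)) (hx ord_max).
apply: has_sum_eq (has_sumD h1 h2) _ _; first by rewrite mulr0 addr0.
move=> v /=; rewrite big_ord_recr /= rmorphD rmorphM /= mulrDr; congr (_ + _).
by rewrite mulrCA.
Qed.

Lemma ebasis_l2 (u : V) : l2 (@ebasis R _ u).
Proof.
rewrite /l2 /sqnorm (esumID [set u]); last by move=> x _; rewrite lee_fin sqr_ge0.
rewrite setTI esum_set1; last by rewrite lee_fin sqr_ge0.
rewrite esum1; first by rewrite adde0 ltry.
move=> v [_ /= vu]; rewrite /ebasis; case: eqP => // _.
by rewrite Normc.normc0 expr0n.
Qed.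

Lemma sum_pred1_uniq (r : seq V) (w : V) (c : C) : uniq r ->
  \sum_(y <- r) (if y == w then c else 0) = if w \in r then c else 0.
Proof.
elim: r => [|y r IH]; first by rewrite big_nil.
rewrite big_cons /= in_cons => /andP[yr ur]; rewrite IH //.
case: (eqVneq y w) => [<-|yw]; first by rewrite ?eqxx (negbTE yr) addr0.
by rewrite ?(eq_sym w) ?(negbTE yw) add0r.
Qed.
Lemma approx (P : set V) (f : V -> C) : l2 f -> (forall w, ~ P w -> f w = 0) ->
  clspan [set @ebasis R _ v | v in P] f.
Proof.
move=> l2f fP; split => // eps eps0.
have Sfin : sqnorm f \is a fin_num by rewrite ge0_fin_numE // sqnorm_ge0.
pose F := fun v => ((nc (f v)) ^+ 2)%:E.
have F0 : forall v, (0 <= F v)%E by move=> v; rewrite lee_fin sqr_ge0.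
have : (sqnorm f - eps%:E < sqnorm f)%E.
  by rewrite -(fineK Sfin) -EFinB lte_fin ltrBlDr ltrDl.
rewrite {2}/sqnorm /esum => /ereal_sup_gt [_ [B [fB _] <-] hB].
have hsplit := esumID B setT F (fun i _ => F0 i).
rewrite setTI (@esum_fset _ _ B F fB) in hsplit; last by move=> i _; exact: F0.
have : (\sum_(i \in B) F i + esum (setT `&` ~` B) F) \is a fin_num.
  by rewrite -hsplit.
rewrite fin_numD => /andP[_ Tfin].
have hT : (esum (setT `&` ~` B) F < eps%:E)%E.
  have hs2 : sqnorm f = (\sum_(i \in B) F i + esum (setT `&` ~` B) F)%E := hsplit.
  move: hs2 hB; rewrite -(fineK Tfin) /F fsumEFin // -EFinD -(fineK Sfin).
  move=> [->]; rewrite -EFinB !lte_fin; lra.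
pose B' := B `&` P.
have fB' : finite_set B' by apply: finite_setIl.
pose r : seq V := fset_set B'.
have inr : forall v, (v \in r) = `[< B' v >].
  by move=> v; rewrite /r in_fset_set // inE.
exists (size r), (fun i => f (tnth (in_tuple r) i)),
  (fun i => @ebasis R _ (tnth (in_tuple r) i)); split.
  move=> i; exists (tnth (in_tuple r) i) => //.
  by have := mem_tnth i (in_tuple r); rewrite inr => /asboolP [].
apply: le_lt_trans hT; rewrite esum_mkcondr; apply: le_esum => v _.
have -> : \sum_(i < size r) f (tnth (in_tuple r) i) * @ebasis R _ (tnth (in_tuple r) i) v
    = if v \in r then f v else 0.
  rewrite -(big_tnth _ _ r xpredT (fun y => f y * @ebasis R _ y v)).
  rewrite -sum_pred1_uniq; last exact: fset_uniq.
  apply: eq_bigr => y _; rewrite /ebasis eq_sym; case: eqP => [->|_].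
    by rewrite mulr1.
  by rewrite mulr0.
rewrite in_setC inr; case: asboolP => [hv|hv].
  by rewrite subrr Normc.normc0 expr0n /=; case: ifP => // _; exact: F0.
rewrite subr0; case: (boolP (v \in B)) => vB /=.
  have nP : ~ P v by move=> Pv; apply: hv; split => //; move: vB; rewrite in_setE.
  by rewrite fP // Normc.normc0 expr0n.
by [].
Qed.
End A.

Section B.
Local Open Scope classical_set_scope.
Local Open Scope ring_scope.
Variables (R : realType) (d : nat) (Tr : 'I_d -> rtree) (lam : 'I_d -> PV Tr -> R).
Local Notation C := R[i].
Local Notation nc := (@Normc.normc R).
Local Notation PV := (PV Tr).

Lemma Chij_uniq j (p q w : PV) : Chij j p w -> Chij j q w -> p = q.
Proof.
move=> [hp ep] [hq eq]; apply/ffunP => i.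
case: (eqVneq i j) => [->|ij]; first exact: tree_par_uniq hp hq.
by rewrite -ep // -eq.
Qed.

Lemma shiftj_par j (g : PV -> C) (p w : PV) : Chij j p w ->
  shiftj lam j g w = real_complex R (lam j w) * g p.
Proof.
move=> hp; rewrite /shiftj.
have -> : [set v | Chij j v w] = [set p].
  by apply/seteqP; split => v /=; [move=> hv; exact: Chij_uniq hv hp|move->].
by rewrite fsbig_set1.
Qed.

Lemma shiftj_nopar j (g : PV -> C) (w : PV) : (forall v, ~ Chij j v w) ->
  shiftj lam j g w = 0.
Proof.
move=> hn; rewrite /shiftj.
have -> : [set v | Chij j v w] = set0 by apply/seteqP; split => v //= /hn.
by rewrite fsbig_set0.
Qed.

Lemma shiftj_root j (g : PV -> C) (w : PV) : w j = troot (Tr j) ->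
  shiftj lam j g w = 0.
Proof.
move=> wr; apply: shiftj_nopar => v [hv _]; move: hv; rewrite wr.
by rewrite (negbTE (tree_root_noparent _)).
Qed.

Lemma shiftj_ebasis j (u w : PV) :
  shiftj lam j (@ebasis R _ u) w = if `[< Chij j u w >] then real_complex R (lam j w) else 0.
Proof.
case: asboolP => h; first by rewrite (shiftj_par _ h) /ebasis eqxx mulr1.
rewrite /shiftj fsbig1 // => v /= hv; rewrite /ebasis.
case: eqP => [vu|]; last by rewrite mulr0.
by subst v.
Qed.

Lemma gen_chi j k (v : PV) (x : PV -> C) (g : PV -> C) :
  Dj k v -> chi_minus_gamma lam k v x ->
  has_sum (fun w => shiftj lam j g w * conjc (x w)) 0.
Proof.
move=> [Vv vr] [_ [xs xg]].
set c := if j == k then g v else 0.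
have := has_sumZ c (has_sum_conj xg).
move/has_sum_eq; apply; first by rewrite rmorph0 mulr0.
move=> w /=.
case: (asboolP (Chij k v w)) => hw; last by rewrite xs // mul0r rmorph0 !mulr0.
rewrite /Gamma; case: asboolP => // _.
rewrite conjR conjM conjR /c.
case: (eqVneq j k) => [jk|jk].
  by subst k; rewrite (shiftj_par g hw); ring.
rewrite shiftj_root ?mul0r //.
by case: hw => _ /(_ j jk) ->; apply: vr.
Qed.

Lemma gen_root j (g : PV -> C) :
  has_sum (fun w => shiftj lam j g w * conjc (@ebasis R _ (proot Tr) w)) 0.
Proof.
apply: has_sum_eq (@has_sum0 R PV) _ _ => // w /=; rewrite /ebasis.
case: eqP => [->|]; last by rewrite rmorph0 mulr0.
by rewrite shiftj_root ?mul0r // /proot ffunE.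
Qed.

Lemma shift_fin j (g : PV -> C) : is_multishift lam -> l2 g ->
  (sqnorm (shiftj lam j g) < +oo)%E.
Proof.
move=> [_ bnd] l2g; have [M HM] := bnd j.
apply: le_lt_trans (HM g l2g) _.
have gf : sqnorm g \is a fin_num by rewrite ge0_fin_numE // sqnorm_ge0.
by rewrite -(fineK gf) -EFinM ltry.
Qed.

Lemma lower_incl : is_multishift lam -> lower_space lam `<=` joint_kernel_adj lam.
Proof.
move=> ms f [l2f happ]; split => // j g l2g.
apply: has_sum_closure; first exact: shift_fin.
move=> delta d0; have [n [a [x [hx hd]]]] := happ delta d0.
exists (fun v => \sum_(i < n) a i * x i v); split => //.
apply: has_sum_span => i; case: (hx i) => [[k [v [Dv cx]]]|->].
  exact: gen_chi Dv cx.
exact: gen_root.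
Qed.

Lemma vanish (f : PV -> C) (w : PV) : is_multishift lam ->
  joint_kernel_adj lam f -> ~ Fprod w -> f w = 0.
Proof.
move=> [pos _] [l2f hk] nF.
have [j nFj] : exists j, ~ Fset (w j) by apply/existsNP.
have wr : w j <> troot (Tr j) by move=> h; apply: nFj; left.
have [p0 hp0] := tree_root_unique wr.
have nV : ~ Vprec p0 by move=> h; apply: nFj; right; exists p0.
pose u : PV := [ffun i => @dfwith _ (fun i => tv (Tr i)) (fun i => w i) j p0 i].
have uj : u j = p0 by rewrite ffunE; exact: dfwith_in.
have uk : forall k, k != j -> u k = w k by move=> k kj; rewrite ffunE; apply: dfwith_out; rewrite eq_sym.
have Cuw : Chij j u w by split; [rewrite uj | move=> k kj; rewrite uk].
have hs := hk j _ (@ebasis_l2 R _ u).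
have := has_sum_single (v := w) _ hs.
have supp : forall w', w' <> w ->
    shiftj lam j (@ebasis R _ u) w' * conjc (f w') = 0.
  move=> w' ww'; rewrite shiftj_ebasis; case: asboolP => [h|]; last by rewrite mul0r.
  exfalso; apply: ww'; apply/ffunP => i; case: (eqVneq i j) => [->|ij].
    case: h => h1 _; rewrite uj in h1.
    case: (eqVneq (w' j) (w j)) => // ne; exfalso; apply: nV.
    by exists (w' j), (w j); split => //; apply/eqP.
  by case: h => _ h2; rewrite h2 // uk.
move=> /(_ supp); rewrite shiftj_ebasis; case: asboolP => // _.
have lp : real_complex R (lam j w) != 0.
  by apply/eqP => -[] /eqP; rewrite gt_eqF // pos.
move/eqP; rewrite mulf_eq0 (negbTE lp) /= => /eqP h.
by rewrite -[f w]conjcK h rmorph0.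
Qed.

Lemma upper_incl : is_multishift lam -> joint_kernel_adj lam `<=` @upper_space R d Tr.
Proof.
move=> ms f hf; apply: approx; first by case: hf.
by move=> w nw; exact: vanish ms hf nw.
Qed.
End B.

Local Open Scope classical_set_scope.

Theorem mainTheorem15 (R : realType) (d : nat) (Tr : 'I_d -> rtree)
    (lam : 'I_d -> PV Tr -> R) :
  (0 < d)%N ->
  is_multishift lam -> commuting_multishift lam ->
  lower_space lam `<=` joint_kernel_adj lam /\
  joint_kernel_adj lam `<=` @upper_space R d Tr.
Proof.
move=> _ ms _; split; [exact: lower_incl | exact: upper_incl].
Qed.
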